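(* Let $P$ be the unit-volume right prism over an equilateral triangle that is circumscribed about a sphere (i.e. all five faces are tangent to a common sphere), and let $Q$ be any unit-volume quadrilateral pyramid. Then the surface area of $P$ is strictly less than the surface area of $Q$.
   Context: A right prism over a triangle has two parallel congruent triangular faces related by a translation perpendicular to their planes, and three rectangular side faces. *)

(* Defs.v *)
From HB Require Import structures.
From mathcomp Require Import all_boot all_order all_algebra.
Set Implicit Arguments. Unset Strict Implicit. Unset Printing Implicit Defensive.
Import Order.TTheory GRing.Theory Num.Theory.
Local Open Scope ring_scope.

Section Geom.
Variable R : rcfType.

Definition vec := (R * R * R)%type.

Definition vx (u : vec) : R := u.1.1.
Definition vy (u : vec) : R := u.1.2.
Definition vz (u : vec) : R := u.2.

Definition vadd (u v : vec) : vec := (vx u + vx v, vy u + vy v, vz u + vz v).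
Definition vsub (u v : vec) : vec := (vx u - vx v, vy u - vy v, vz u - vz v).
Definition vscale (a : R) (u : vec) : vec := (a * vx u, a * vy u, a * vz u).
Definition vzero : vec := (0, 0, 0).
Definition dot (u v : vec) : R := vx u * vx v + vy u * vy v + vz u * vz v.
Definition cross (u v : vec) : vec :=
  (vy u * vz v - vz u * vy v, vz u * vx v - vx u * vz v, vx u * vy v - vy u * vx v).
Definition vnorm (u : vec) : R := Num.sqrt (dot u u).

Definition tri_area (X Y Z : vec) : R := vnorm (cross (vsub Y X) (vsub Z X)) / 2.
Definition par_area (u v : vec) : R := vnorm (cross u v).
Definition tet_vol (X Y Z W : vec) : R :=
  `|dot (cross (vsub Y X) (vsub Z X)) (vsub W X)| / 6.

(* vertices A B C (bottom face) and A+t, B+t, C+t (top face); t is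
   perpendicular to the plane of the non-degenerate triangle ABC. *)
Definition is_right_prism (A B C t : vec) : Prop :=
  [/\ cross (vsub B A) (vsub C A) <> vzero, t <> vzero,
      dot t (vsub B A) = 0 & dot t (vsub C A) = 0].

Definition equilateral (A B C : vec) : Prop :=
  vnorm (vsub B A) = vnorm (vsub C B) /\ vnorm (vsub C B) = vnorm (vsub A C).

(* The triangular face XYZ is tangent to the sphere S(c, r): the sphere
   touches the plane of the face at a point p of the (closed) face,
   i.e. |p - c| = r and p - c is normal to the face. *)
Definition tri_face_tangent (X Y Z c : vec) (r : R) : Prop :=
  exists a b g : R, [/\ 0 <= a, 0 <= b, 0 <= g, a + b + g = 1 &
    let p := vadd (vscale a X) (vadd (vscale b Y) (vscale g Z)) in
    [/\ vnorm (vsub p c) = r, dot (vsub p c) (vsub Y X) = 0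
      & dot (vsub p c) (vsub Z X) = 0]].

Definition par_face_tangent (X u v c : vec) (r : R) : Prop :=
  exists s w : R, [/\ 0 <= s <= 1, 0 <= w <= 1 &
    let p := vadd X (vadd (vscale s u) (vscale w v)) in
    [/\ vnorm (vsub p c) = r, dot (vsub p c) u = 0 & dot (vsub p c) v = 0]].

Definition prism_circumscribed (A B C t : vec) : Prop :=
  exists (c : vec) (r : R), 0 < r /\
    [/\ tri_face_tangent A B C c r,
        tri_face_tangent (vadd A t) (vadd B t) (vadd C t) c r,
        par_face_tangent A (vsub B A) t c r,
        par_face_tangent B (vsub C B) t c r &
        par_face_tangent C (vsub A C) t c r].

Definition prism_volume (A B C t : vec) : R := tri_area A B C * vnorm t.

Definition prism_surface (A B C t : vec) : R :=
  tri_area A B C + tri_area (vadd A t) (vadd B t) (vadd C t)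
  + par_area (vsub B A) t + par_area (vsub C B) t + par_area (vsub A C) t.

(* The base is a (strictly) convex planar quadrilateral with vertices in
   cyclic order Q1 Q2 Q3 Q4: the four points are coplanar and every
   consecutive turn has the same orientation with respect to the normal n;
   the apex E does not lie in the plane of the base. *)
Definition is_quad_pyramid (Q1 Q2 Q3 Q4 E : vec) : Prop :=
  let n := cross (vsub Q2 Q1) (vsub Q3 Q2) in
  [/\ n <> vzero,
      dot n (vsub Q4 Q1) = 0,
      dot n (vsub E Q1) <> 0 &
      [/\
      0 < dot n (cross (vsub Q3 Q2) (vsub Q4 Q3)),
      0 < dot n (cross (vsub Q4 Q3) (vsub Q1 Q4)) &
      0 < dot n (cross (vsub Q1 Q4) (vsub Q2 Q1))]].

Definition pyramid_volume (Q1 Q2 Q3 Q4 E : vec) : R :=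
  tet_vol Q1 Q2 Q3 E + tet_vol Q1 Q3 Q4 E.

(* base area (convex quadrilateral split along the diagonal Q1Q3) plus the
   four lateral triangles *)
Definition pyramid_surface (Q1 Q2 Q3 Q4 E : vec) : R :=
  (tri_area Q1 Q2 Q3 + tri_area Q1 Q3 Q4)
  + tri_area E Q1 Q2 + tri_area E Q2 Q3 + tri_area E Q3 Q4 + tri_area E Q4 Q1.

End Geom.

(* Main.v *)
Require Import Defs.
From mathcomp Require Import all_boot all_order all_algebra.
From mathcomp Require Import ring lra.
Import Order.TTheory GRing.Theory Num.Theory.
Local Open Scope ring_scope.

Ltac vunf := rewrite /dot /cross /vsub /vadd /vscale /vx /vy /vz /vzero /=.

Section B.
Context {R : rcfType}.
Implicit Types u v w a b y z : vec R.

Lemma dot_ge0 u : 0 <= dot u u.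
Proof. vunf; nra. Qed.

Lemma dot0 u : dot u u = 0 -> u = vzero R.
Proof.
case: u => [[u1 u2] u3]; vunf => h.
have h1 : u1 = 0 by nra. have h2 : u2 = 0 by nra. have h3 : u3 = 0 by nra.
by rewrite h1 h2 h3.
Qed.

Lemma vnorm_ge0 u : 0 <= vnorm u.
Proof. exact: sqrtr_ge0. Qed.

Lemma vnorm_sq u : vnorm u ^+ 2 = dot u u.
Proof. by rewrite /vnorm sqr_sqrtr // dot_ge0. Qed.

Lemma vnorm_eq u (a : R) : 0 <= a -> a ^+ 2 = dot u u -> vnorm u = a.
Proof. by move=> ha h; rewrite /vnorm -h sqrtr_sqr ger0_norm. Qed.

Lemma vlagr a b : dot (cross a b) (cross a b) = dot a a * dot b b - (dot a b) ^+ 2.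
Proof. vunf; ring. Qed.

Lemma binet a b (c d : vec R) : dot (cross a b) (cross c d) = dot a c * dot b d - dot a d * dot b c.
Proof. vunf; ring. Qed.

Lemma dotC a b : dot a b = dot b a.
Proof. vunf; ring. Qed.

Lemma dot0l a : dot (vzero R) a = 0.
Proof. vunf; ring. Qed.

Lemma sq_le (p q : R) : 0 <= q -> p ^+ 2 <= q ^+ 2 -> p <= q.
Proof. move=> hq h; nra. Qed.

Lemma CS a b : dot a b <= vnorm a * vnorm b.
Proof.
apply: sq_le; first by apply: mulr_ge0; apply: vnorm_ge0.
rewrite exprMn !vnorm_sq -subr_ge0 -vlagr; exact: dot_ge0.
Qed.

Lemma cross_le a b : vnorm (cross a b) <= vnorm a * vnorm b.
Proof.
apply: sq_le; first by apply: mulr_ge0; apply: vnorm_ge0.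
rewrite exprMn !vnorm_sq vlagr; have := sqr_ge0 (dot a b); lra.
Qed.

Lemma par_dot w y z : cross w y = vzero R -> dot w w * dot y z = dot w y * dot w z.
Proof.
move=> h; have := binet w y w z; rewrite h dot0l => e.
rewrite (dotC y w) in e; lra.
Qed.

Lemma cross_perp u v y : dot u y = 0 -> dot v y = 0 -> cross (cross u v) y = vzero R.
Proof.
move: u v y => [[u1 u2] u3] [[v1 v2] v3] [[y1 y2] y3]; vunf => h1 h2.
congr (_,_,_).
- have -> : ((u3 * v1 - u1 * v3) * y3 - (u1 * v2 - u2 * v1) * y2) = v1 * (u1*y1+u2*y2+u3*y3) - u1 * (v1*y1+v2*y2+v3*y3) by ring.
  by rewrite h1 h2; ring.
- have -> : ((u1 * v2 - u2 * v1) * y1 - (u2 * v3 - u3 * v2) * y3) = v2 * (u1*y1+u2*y2+u3*y3) - u2 * (v1*y1+v2*y2+v3*y3) by ring.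
  by rewrite h1 h2; ring.
- have -> : ((u2 * v3 - u3 * v2) * y2 - (u3 * v1 - u1 * v3) * y1) = v3 * (u1*y1+u2*y2+u3*y3) - u3 * (v1*y1+v2*y2+v3*y3) by ring.
  by rewrite h1 h2; ring.
Qed.

Lemma mink (y1 y2 a1 a2 b1 b2 : R) : 0 <= y1 -> 0 <= y2 ->
  a1 ^+ 2 + b1 ^+ 2 <= y1 ^+ 2 -> a2 ^+ 2 + b2 ^+ 2 <= y2 ^+ 2 ->
  (a1 + a2) ^+ 2 + (b1 + b2) ^+ 2 <= (y1 + y2) ^+ 2.
Proof.
move=> h1 h2 e1 e2.
have hc : a1 * a2 + b1 * b2 <= y1 * y2.
  case: (lerP (a1 * a2 + b1 * b2) 0) => hs.
    by apply: (le_trans hs); apply: mulr_ge0.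
  apply: sq_le; first exact: mulr_ge0.
  rewrite exprMn.
  have cs : (a1 * a2 + b1 * b2) ^+ 2 <= (a1 ^+ 2 + b1 ^+ 2) * (a2 ^+ 2 + b2 ^+ 2).
    have := sqr_ge0 (a1 * b2 - a2 * b1); rewrite -subr_ge0; move=> h.
    rewrite -subr_ge0. have -> : (a1 ^+ 2 + b1 ^+ 2) * (a2 ^+ 2 + b2 ^+ 2) - (a1 * a2 + b1 * b2) ^+ 2 = (a1 * b2 - a2 * b1) ^+ 2 by ring.
    exact: sqr_ge0.
  apply: (le_trans cs); apply: ler_pM => //; apply: addr_ge0; exact: sqr_ge0.
nra.
Qed.
End B.

Section P.
Context {R : rcfType}.
Implicit Types u v w a b y z n X Y Z E : vec R.

Lemma fin (k B L hq : R) : 0 < k -> k ^+ 3 < 288 -> 0 < B -> 0 <= L -> B * hq = 3 ->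
  4 * B ^+ 2 + 16 * hq ^+ 2 * B <= 4 * L ^+ 2 -> k < B + L.
Proof.
move=> hk hk3 hB hL hBh hLL.
have h9 : hq ^+ 2 * B ^+ 2 = 9 by rewrite -exprMn mulrC hBh; ring.
case: (lerP k B) => hkB.
  have hq0 : hq <> 0 by move=> e; rewrite e mulr0 in hBh; lra.
  have : 0 < hq ^+ 2 by rewrite exprn_gt0 // ?lt_def ?sqr_ge0 //; nra.
  move=> hq2.
  have : 0 < L by nra.
  lra.
have key : k ^+ 2 * B - 2 * k * B ^+ 2 < 36.
  have : 0 <= k * (k - 4 * B) ^+ 2 by apply: mulr_ge0; [lra| exact: sqr_ge0].
  nra.
have : (k - B) ^+ 2 < L ^+ 2 by nra.
nra.
Qed.

Lemma crossxx n a b : cross n (cross a b) = vsub (vscale (dot n b) a) (vscale (dot n a) b).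
Proof. vunf; congr (_,_,_); ring. Qed.

Lemma lat n X Y E : dot n (vsub Y X) = 0 ->
  dot n n * dot (cross (vsub X E) (vsub Y E)) (cross (vsub X E) (vsub Y E)) =
  (dot n (cross (vsub X E) (vsub Y E))) ^+ 2 + dot (vsub Y X) (vsub Y X) * (dot n (vsub X E)) ^+ 2.
Proof.
move=> h.
have e1 : dot n (vsub Y E) = dot n (vsub X E) + dot n (vsub Y X) by vunf; ring.
rewrite h addr0 in e1.
have := vlagr n (cross (vsub X E) (vsub Y E)).
rewrite crossxx e1 => e.
have ee : dot (vsub (vscale (dot n (vsub X E)) (vsub X E)) (vscale (dot n (vsub X E)) (vsub Y E)))
              (vsub (vscale (dot n (vsub X E)) (vsub X E)) (vscale (dot n (vsub X E)) (vsub Y E)))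
          = dot (vsub Y X) (vsub Y X) * (dot n (vsub X E)) ^+ 2 by vunf; ring.
rewrite ee in e.
lra.
Qed.

Lemma eqle {a b : R} : a = b -> a <= b. Proof. by move->. Qed.

Lemma final (k m m' aH x1 x2 x3 x4 l1 l2 l3 l4 s1 s2 s3 s4 : R) :
  0 < k -> k ^+ 3 < 288 -> 0 < m -> 0 < m' -> 0 <= aH ->
  0 <= x1 -> 0 <= x2 -> 0 <= x3 -> 0 <= x4 ->
  0 <= l1 -> 0 <= l2 -> 0 <= l3 -> 0 <= l4 ->
  (m * x1) ^+ 2 = s1 ^+ 2 + (l1 * aH) ^+ 2 ->
  (m * x2) ^+ 2 = s2 ^+ 2 + (l2 * aH) ^+ 2 ->
  (m * x3) ^+ 2 = s3 ^+ 2 + (l3 * aH) ^+ 2 ->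
  (m * x4) ^+ 2 = s4 ^+ 2 + (l4 * aH) ^+ 2 ->
  s1 + s2 + s3 + s4 = m ^+ 2 + m * m' ->
  m + m' <= l1 * l2 + l3 * l4 -> m + m' <= l2 * l3 + l4 * l1 ->
  aH * (m + m') = 6 * m ->
  k < (m + m') / 2 + (x1 / 2 + x2 / 2 + x3 / 2 + x4 / 2).
Proof.
move=> hk hk3 hm hm' haH hx1 hx2 hx3 hx4 hl1 hl2 hl3 hl4 e1 e2 e3 e4 es P1 P2 hV.
have y1 : 0 <= m * x1 by apply: mulr_ge0; lra.
have y2 : 0 <= m * x2 by apply: mulr_ge0; lra.
have y3 : 0 <= m * x3 by apply: mulr_ge0; lra.
have y4 : 0 <= m * x4 by apply: mulr_ge0; lra.
have M12 := mink _ _ _ _ _ _ y1 y2 (eqle (esym e1)) (eqle (esym e2)).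
have M123 := mink _ _ _ _ _ _ (addr_ge0 y1 y2) y3 M12 (eqle (esym e3)).
have M := mink _ _ _ _ _ _ (addr_ge0 (addr_ge0 y1 y2) y3) y4 M123 (eqle (esym e4)).
rewrite es in M.
set X := x1 + x2 + x3 + x4.
set P := l1 + l2 + l3 + l4.
have hX : m * x1 + m * x2 + m * x3 + m * x4 = m * X by rewrite /X; ring.
have hP : l1 * aH + l2 * aH + l3 * aH + l4 * aH = P * aH by rewrite /P; ring.
rewrite hX hP in M.
have PP : 8 * (m + m') <= P ^+ 2.
  have : 2 * (m + m') <= (l1 + l3) * (l2 + l4) by lra.
  have := sqr_ge0 (l1 + l3 - (l2 + l4)).
  rewrite /P; nra.
have HP : 8 * (m + m') * aH ^+ 2 <= (P * aH) ^+ 2.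
  rewrite exprMn; apply: ler_wpM2r => //; exact: sqr_ge0.
have key : m ^+ 2 * ((m + m') ^+ 2 + 8 * (m + m') * (aH / m) ^+ 2) <= m ^+ 2 * X ^+ 2.
  have -> : m ^+ 2 * ((m + m') ^+ 2 + 8 * (m + m') * (aH / m) ^+ 2)
            = (m ^+ 2 + m * m') ^+ 2 + 8 * (m + m') * aH ^+ 2.
    by field; apply/eqP => h; rewrite h in hm; rewrite ltxx in hm.
  rewrite -exprMn; lra.
rewrite ler_pM2l ?exprn_gt0 // in key.
have -> : (x1 / 2 + x2 / 2 + x3 / 2 + x4 / 2) = X / 2 by rewrite /X; ring.
have m0 : m != 0 by apply/eqP => h; rewrite h ltxx in hm.
apply: (fin _ _ _ (aH / m)) => //.
- lra.
- rewrite /X; lra.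
  have -> : (m + m') / 2 * (aH / m) = (aH * (m + m')) / (2 * m) by field.
  by rewrite hV; field.
- have -> : 4 * ((m + m') / 2) ^+ 2 + 16 * (aH / m) ^+ 2 * ((m + m') / 2)
          = (m + m') ^+ 2 + 8 * (m + m') * (aH / m) ^+ 2 by field.
  have -> : 4 * (X / 2) ^+ 2 = X ^+ 2 by field.
  exact: key.
Qed.

Lemma pyr (Q1 Q2 Q3 Q4 E : vec R) (k : R) :
  is_quad_pyramid Q1 Q2 Q3 Q4 E -> pyramid_volume Q1 Q2 Q3 Q4 E = 1 ->
  0 < k -> k ^+ 3 < 288 -> k < pyramid_surface Q1 Q2 Q3 Q4 E.
Proof.
rewrite /is_quad_pyramid /pyramid_volume /pyramid_surface /tet_vol /tri_area.
have hn : cross (vsub Q2 Q1) (vsub Q3 Q2) = cross (vsub Q2 Q1) (vsub Q3 Q1) by vunf; congr (_,_,_); ring.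
have hn' : cross (vsub Q4 Q3) (vsub Q1 Q4) = cross (vsub Q3 Q1) (vsub Q4 Q1) by vunf; congr (_,_,_); ring.
rewrite hn hn' => -[nz h4 hE [c1 c2 c3]] hV hk hk3.
have iS : dot (cross (vsub Q2 Q1) (vsub Q3 Q1)) (cross (vsub Q1 E) (vsub Q2 E))
        + dot (cross (vsub Q2 Q1) (vsub Q3 Q1)) (cross (vsub Q2 E) (vsub Q3 E))
        + dot (cross (vsub Q2 Q1) (vsub Q3 Q1)) (cross (vsub Q3 E) (vsub Q4 E))
        + dot (cross (vsub Q2 Q1) (vsub Q3 Q1)) (cross (vsub Q4 E) (vsub Q1 E))
        = dot (cross (vsub Q2 Q1) (vsub Q3 Q1)) (cross (vsub Q2 Q1) (vsub Q3 Q1))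
        + dot (cross (vsub Q2 Q1) (vsub Q3 Q1)) (cross (vsub Q3 Q1) (vsub Q4 Q1)) by vunf; ring.
have iA : dot (cross (vsub Q2 Q1) (vsub Q3 Q1)) (cross (vsub Q2 Q1) (vsub Q3 Q1))
        + dot (cross (vsub Q2 Q1) (vsub Q3 Q1)) (cross (vsub Q3 Q1) (vsub Q4 Q1))
        = dot (cross (vsub Q2 Q1) (vsub Q3 Q1)) (cross (vsub Q2 Q1) (vsub Q3 Q2))
        + dot (cross (vsub Q2 Q1) (vsub Q3 Q1)) (cross (vsub Q4 Q3) (vsub Q1 Q4)) by vunf; ring.
have iB : dot (cross (vsub Q2 Q1) (vsub Q3 Q1)) (cross (vsub Q2 Q1) (vsub Q3 Q1))
        + dot (cross (vsub Q2 Q1) (vsub Q3 Q1)) (cross (vsub Q3 Q1) (vsub Q4 Q1))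
        = dot (cross (vsub Q2 Q1) (vsub Q3 Q1)) (cross (vsub Q3 Q2) (vsub Q4 Q3))
        + dot (cross (vsub Q2 Q1) (vsub Q3 Q1)) (cross (vsub Q1 Q4) (vsub Q2 Q1)) by vunf; ring.
have o2 : dot (cross (vsub Q2 Q1) (vsub Q3 Q1)) (vsub Q2 Q1) = 0 by vunf; ring.
have o3 : dot (cross (vsub Q2 Q1) (vsub Q3 Q1)) (vsub Q3 Q1) = 0 by vunf; ring.
have o1 : dot (cross (vsub Q2 Q1) (vsub Q3 Q1)) (vsub Q1 Q1) = 0 by vunf; ring.
have lin : forall n X Y Z, dot n (vsub Y X) = dot n (vsub Y Z) - dot n (vsub X Z)
  by move=> *; vunf; ring.
have linE : forall n X, dot n (vsub X E) = dot n (vsub X Q1) + dot n (vsub Q1 E)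
  by move=> *; vunf; ring.
have oQ4 : dot (cross (vsub Q2 Q1) (vsub Q3 Q1)) (vsub Q4 Q1) = 0 by rewrite -h4.
have hH1 : forall n, dot n (vsub Q1 E) = - dot n (vsub E Q1) by move=> *; vunf; ring.
have ce : forall a b, cross (vsub a E) (vsub b E) = cross (vsub a E) (vsub b E) by [].
have cp : cross (cross (vsub Q3 Q1) (vsub Q4 Q1)) (cross (vsub Q2 Q1) (vsub Q3 Q1)) = vzero R.
  by apply: cross_perp; rewrite dotC.
set N := cross (vsub Q2 Q1) (vsub Q3 Q1) in nz iS iA iB o1 o2 o3 oQ4 hV c2 cp *.
set N' := cross (vsub Q3 Q1) (vsub Q4 Q1) in iS iA iB hV c2 cp *.
set H := dot N (vsub E Q1) in hV *.
set G := dot N' (vsub E Q1) in hV *.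
have NNpos : 0 < dot N N.
  rewrite lt_def dot_ge0 andbT; apply/eqP => /dot0; exact: nz.
set m := vnorm N.
have m2 : m ^+ 2 = dot N N by rewrite vnorm_sq.
have m0 : 0 < m.
  have := vnorm_ge0 N; rewrite -/m => h; rewrite lt_def h andbT; apply/eqP => e.
  by move: NNpos; rewrite -m2 e expr2 mulr0 ltxx.
set m' := vnorm N'.
have m'2 : m' ^+ 2 = dot N' N' by rewrite vnorm_sq.
have m'0 : 0 <= m' by exact: vnorm_ge0.
have p1 := par_dot N' N N cp.
have p2 := par_dot N' N (vsub E Q1) cp.
rewrite -/G -/H (dotC N' N) in p1 p2.
clear cp nz hE hn hn' ce.
have NN' : dot N N' = m * m'.
  have e : (dot N N') ^+ 2 = (m * m') ^+ 2 by rewrite exprMn m2 m'2 mulrC p1 expr2.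
  apply/eqP; rewrite eq_le; apply/andP; split.
    apply: sq_le; [by apply: mulr_ge0; lra | by rewrite e].
  apply: sq_le; [lra | by rewrite e].
have m'pos : 0 < m'.
  rewrite lt_def m'0 andbT; apply/eqP => e; rewrite e mulr0 in NN'; lra.
have GH : m * G = m' * H.
  rewrite NN' -m'2 in p2.
  have : m' * (m' * H - m * G) = 0 by rewrite mulrBr mulrA -expr2 p2; ring.
  move/eqP; rewrite mulf_eq0 => /orP[/eqP e|]; first lra.
  by rewrite subr_eq0 => /eqP ->.
have nG : m * `|G| = m' * `|H|.
  by have := congr1 Num.norm GH; rewrite !normrM (ger0_norm (ltW m0)) (ger0_norm m'0).
have hHG : `|H| + `|G| = 6 by lra.
have aHV : `|H| * (m + m') = 6 * m.
  have : m * (`|H| + `|G|) = m * 6 by rewrite hHG.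
  lra.
have e2' : dot N (vsub Q3 Q2) = 0 by rewrite (lin _ _ _ Q1) o3 o2 subrr.
have e3' : dot N (vsub Q4 Q3) = 0 by rewrite (lin _ _ _ Q1) oQ4 o3 subrr.
have e4' : dot N (vsub Q1 Q4) = 0 by rewrite (lin _ _ _ Q1) o1 oQ4 subrr.
have latf : forall X Y, dot N (vsub Y X) = 0 -> dot N (vsub X Q1) = 0 ->
  (m * vnorm (cross (vsub X E) (vsub Y E))) ^+ 2 =
  (dot N (cross (vsub X E) (vsub Y E))) ^+ 2 + (vnorm (vsub Y X) * `|H|) ^+ 2.
  move=> X Y h hx; have := lat N X Y E h.
  rewrite exprMn m2 vnorm_sq => ->.
  rewrite linE hx add0r hH1 -/H exprMn vnorm_sq sqrrN -normrX ger0_norm //.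
  exact: sqr_ge0.
have bnd : forall a b, dot N (cross a b) <= m * (vnorm a * vnorm b).
  move=> a b; apply: (le_trans (CS N _)); rewrite -/m.
  apply: ler_wpM2l; [exact: vnorm_ge0 | exact: cross_le].
have PA : m + m' <= vnorm (vsub Q2 Q1) * vnorm (vsub Q3 Q2) + vnorm (vsub Q4 Q3) * vnorm (vsub Q1 Q4).
  rewrite -(ler_pM2l m0) mulrDr mulrDr -expr2 m2 -NN' iA.
  by apply: lerD; apply: bnd.
have PB : m + m' <= vnorm (vsub Q3 Q2) * vnorm (vsub Q4 Q3) + vnorm (vsub Q1 Q4) * vnorm (vsub Q2 Q1).
  rewrite -(ler_pM2l m0) mulrDr mulrDr -expr2 m2 -NN' iB.
  by apply: lerD; apply: bnd.
have hsum := iS; rewrite -m2 NN' in hsum.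
have := final _ _ _ _ _ _ _ _ _ _ _ _ _ _ _ _ hk hk3 m0 m'pos (normr_ge0 H) (vnorm_ge0 _) (vnorm_ge0 _) (vnorm_ge0 _) (vnorm_ge0 _)
  (vnorm_ge0 _) (vnorm_ge0 _) (vnorm_ge0 _) (vnorm_ge0 _)
  (latf _ _ o2 o1) (latf _ _ e2' o2) (latf _ _ e3' o3) (latf _ _ e4' oQ4) hsum PA PB aHV.
by rewrite mulrDl !addrA.
Qed.



End P.

Section Pr.
Context {R : rcfType}.
Implicit Types (u v t z X Y : vec R) (a b g r : R).

Lemma sq_eq (p q : R) : 0 <= p -> 0 <= q -> p ^+ 2 = q ^+ 2 -> p = q.
Proof.
move=> hp hq e; apply: le_anti; apply/andP; split; apply: sq_le => //; by rewrite e.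
Qed.

Lemma prism_final (T K tn x hh : R) : 0 <= T -> 0 <= K -> 0 <= tn -> 0 < x ->
  T ^+ 2 = 3 * x ^+ 2 / 16 -> K ^+ 2 = x * hh -> tn ^+ 2 = hh -> hh = x / 3 ->
  T * tn = 1 -> 0 < T + T + K + K + K /\ (T + T + K + K + K) ^+ 3 < 288.
Proof.
move=> hT hK htn hx eT eK etn ehh hV.
have x3 : x ^+ 3 = 16.
  have : (T * tn) ^+ 2 = 1 by rewrite hV expr1n.
  rewrite exprMn eT etn ehh => e.
  have -> : x ^+ 3 = 16 * (3 * x ^+ 2 / 16 * (x / 3)) by field.
  by rewrite e mulr1.
have TK : T * K = x ^+ 2 / 4.
  have e : (T * K) ^+ 2 = (x ^+ 2 / 4) ^+ 2.
    by rewrite exprMn eT eK ehh; field.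
  apply: (sq_eq (T * K) (x ^+ 2 / 4)) => //; first exact: mulr_ge0.
  apply: mulr_ge0; [exact: sqr_ge0| lra].
set S := T + T + K + K + K.
have S2 : S ^+ 2 = 27 * x ^+ 2 / 4.
  have -> : S ^+ 2 = 4 * T ^+ 2 + 12 * (T * K) + 9 * K ^+ 2 by rewrite /S; ring.
  by rewrite eT TK eK ehh; field.
have Tpos : 0 < T.
  rewrite lt_def hT andbT; apply/eqP => e; rewrite e mul0r in hV.
  by move/eqP: hV; rewrite eq_sym oner_eq0.
have S0 : 0 < S by rewrite /S; lra.
split => //.
have S6 : (S ^+ 3) ^+ 2 = 4 * 27 ^+ 3.
  have -> : (S ^+ 3) ^+ 2 = (S ^+ 2) ^+ 3 by rewrite -!exprM mulnC.
  rewrite S2.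
  have -> : (27 * x ^+ 2 / 4) ^+ 3 = (27 / 4) ^+ 3 * (x ^+ 3) ^+ 2 by rewrite -exprM; field.
  by rewrite x3; field.
have S3 : 0 < S ^+ 3 by rewrite exprn_gt0.
nra.
Qed.

Definition lin3 (a b g : R) (u v t : vec R) :=
  vadd (vscale a u) (vadd (vscale b v) (vscale g t)).

Lemma dot_lin3 a b g u v t z : dot (lin3 a b g u v t) z = a * dot u z + b * dot v z + g * dot t z.
Proof. rewrite /lin3; vunf; ring. Qed.

Lemma gram a b g (a' b' g' : R) u v t : dot (lin3 a b g u v t) (lin3 a' b' g' u v t) =
  a * a' * dot u u + b * b' * dot v v + g * g' * dot t t + (a * b' + b * a') * dot u v
  + (a * g' + g * a') * dot u t + (b * g' + g * b') * dot v t.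
Proof. rewrite /lin3; vunf; ring. Qed.

Lemma lin3_add a b g (a' b' g' : R) u v t :
  vadd (lin3 a b g u v t) (lin3 a' b' g' u v t) = lin3 (a + a') (b + b') (g + g') u v t.
Proof. rewrite /lin3; vunf; congr (_,_,_); ring. Qed.

Lemma lin3_t u v t : t = lin3 0 0 1 u v t.
Proof. case: t => [[t1 t2] t3]; rewrite /lin3; vunf; congr (_,_,_); ring. Qed.

Lemma dot_d0 X a b g u v t z : dot (vadd X (lin3 a b g u v t)) z = dot X z + (a * dot u z + b * dot v z + g * dot t z).
Proof. rewrite /lin3; vunf; ring. Qed.

Lemma dot_addt y t : dot (vadd y t) (vadd y t) = dot y y + 2 * dot y t + dot t t.
Proof. vunf; ring. Qed.

Lemma dot_addht y t : dot (vadd y (vscale (1/2) t)) (vadd y (vscale (1/2) t)) = dot y y + dot y t + dot t t / 4.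
Proof. by vunf; field. Qed.

Lemma lin3_shift X a b u v t : vadd X (lin3 a b 1 u v t) = vadd (vadd X (lin3 a b 0 u v t)) t.
Proof. rewrite /lin3; vunf; congr (_,_,_); ring. Qed.

Lemma solve_d0 X a b u v t : vadd (vadd X (lin3 a b 0 u v t)) (vscale (1/2) t) = vzero R ->
  X = lin3 (-a) (-b) (-(1/2)) u v t.
Proof.
case: X => [[x1 x2] x3]; rewrite /lin3; vunf => -[e1 e2 e3].
congr (_,_,_); lra.
Qed.

Lemma vsub_tr X Y t : vsub (vadd Y t) (vadd X t) = vsub Y X.
Proof. vunf; congr (_,_,_); ring. Qed.

Lemma dot_addl X Y z : dot (vadd X Y) z = dot X z + dot Y z.
Proof. vunf; ring. Qed.

Lemma vnorm_dot {z : vec R} {r : R} : vnorm z = r -> dot z z = r ^+ 2.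
Proof. by move=> <-; rewrite vnorm_sq. Qed.


Lemma cancel0 {p q : R} : 0 < p -> p * q = 0 -> q = 0.
Proof. by move=> hp /eqP; rewrite mulf_eq0 (gt_eqF hp) /= => /eqP. Qed.

Lemma prism_solve (x hh b g s1 w1 s2 w2 s3 w3 : R) : 0 < x -> 0 < hh ->
  0 <= s1 <= 1 -> 0 <= s2 <= 1 -> 0 <= s3 <= 1 ->
  (w1 - 1/2) * hh = 0 -> (s1 - b) * x + (- g) * (x / 2) = 0 ->
  ((s1 - b) ^+ 2 + g ^+ 2 + (s1 - b) * (- g)) * x + (w1 - 1/2) ^+ 2 * hh = hh / 4 ->
  (w2 - 1/2) * hh = 0 -> (s2 - g - (1 - s2 - b)) / 2 * x = 0 ->
  ((1 - s2 - b) ^+ 2 + (s2 - g) ^+ 2 + (1 - s2 - b) * (s2 - g)) * x + (w2 - 1/2) ^+ 2 * hh = hh / 4 ->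
  (w3 - 1/2) * hh = 0 -> (- (1 - s3 - g) + b / 2) * x = 0 ->
  (b ^+ 2 + (1 - s3 - g) ^+ 2 + (- b) * (1 - s3 - g)) * x + (w3 - 1/2) ^+ 2 * hh = hh / 4 ->
  hh = x / 3.
Proof.
move=> x0 h0 /andP[s1a s1b] /andP[s2a s2b] /andP[s3a s3b] t1 u1 n1 t2 u2 n2 t3 u3 n3.
have {t1}t1 := cancel0 h0 (etrans (mulrC _ _) t1).
have {t2}t2 := cancel0 h0 (etrans (mulrC _ _) t2).
have {t3}t3 := cancel0 h0 (etrans (mulrC _ _) t3).
rewrite t1 expr0n /= mul0r addr0 in n1.
rewrite t2 expr0n /= mul0r addr0 in n2.
rewrite t3 expr0n /= mul0r addr0 in n3.
have a1 : s1 = b + g / 2.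
  have : x * (s1 - b - g / 2) = 0 by rewrite -u1; ring.
  move/(cancel0 x0); lra.
have a2 : s2 = (1 - b + g) / 2.
  have : x * ((s2 - g - (1 - s2 - b)) / 2) = 0 by rewrite -u2; ring.
  move/(cancel0 x0); lra.
have a3 : s3 = 1 - g - b / 2.
  have : x * (- (1 - s3 - g) + b / 2) = 0 by rewrite -u3; ring.
  move/(cancel0 x0); lra.
rewrite a1 in n1 s1a s1b. rewrite a2 in n2 s2a s2b. rewrite a3 in n3 s3a s3b.
have e12 : x * (3 / 4 * (g ^+ 2 - b ^+ 2)) = 0 by lra.
have e23 : x * (3 / 4 * ((1 - b - g) ^+ 2 - b ^+ 2)) = 0 by lra.
move/(cancel0 x0): e12 => e12. move/(cancel0 x0): e23 => e23.
have f1 : (g - b) * (g + b) = 0 by lra.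
have f2 : (1 - b - g - b) * (1 - b - g + b) = 0 by lra.
have hb : b = 1 / 3.
  move/eqP: f1; rewrite mulf_eq0 => /orP[] /eqP f1;
  move/eqP: f2; rewrite mulf_eq0 => /orP[] /eqP f2; lra.
rewrite hb in n3.
lra.
Qed.

Lemma prism (A B C t : vec R) :
  is_right_prism A B C t -> equilateral A B C -> prism_circumscribed A B C t ->
  prism_volume A B C t = 1 ->
  0 < prism_surface A B C t /\ prism_surface A B C t ^+ 3 < 288.
Proof.
move=> [Wnz tnz tu tv] [eq1 eq2] [c [r [r0 [T1 T2 F1 F2 F3]]]] hvol.
have ecb : vsub C B = lin3 (-1) 1 0 (vsub B A) (vsub C A) t by rewrite /lin3; vunf; congr (_,_,_); ring.
have eac : vsub A C = lin3 0 (-1) 0 (vsub B A) (vsub C A) t by rewrite /lin3; vunf; congr (_,_,_); ring.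
have eu : vsub B A = lin3 1 0 0 (vsub B A) (vsub C A) t by rewrite /lin3; vunf; congr (_,_,_); ring.
have ev : vsub C A = lin3 0 1 0 (vsub B A) (vsub C A) t by rewrite /lin3; vunf; congr (_,_,_); ring.
have et := lin3_t (vsub B A) (vsub C A) t.
set u := vsub B A in ecb eac eu ev et Wnz tu eq1 *.
set v := vsub C A in ecb eac eu ev et Wnz tv eq1 eq2 *.
set x := dot u u.
have hvv : dot v v = x.
  have := congr1 (fun q : R => q ^+ 2) eq2; rewrite /= !vnorm_sq eac gram.
  have := congr1 (fun q : R => q ^+ 2) eq1; rewrite /= !vnorm_sq ecb gram.
  rewrite -/x; move=> *; lra.
have huv : dot u v = x / 2.
  have := congr1 (fun q : R => q ^+ 2) eq1; rewrite /= !vnorm_sq ecb gram -/x hvv.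
  move=> *; lra.
have hut : dot u t = 0 by rewrite dotC.
have hvt : dot v t = 0 by rewrite dotC.
set hh := dot t t.
have gr : forall a b g a' b' g', dot (lin3 a b g u v t) (lin3 a' b' g' u v t) =
   (a * a' + b * b' + (a * b' + b * a') / 2) * x + g * g' * hh.
  by move=> *; rewrite gram hvv huv hut hvt -/x -/hh; field.
have hh0 : 0 < hh.
  rewrite lt_def dot_ge0 andbT; apply/eqP => /dot0; exact: tnz.
have x0 : 0 < x.
  rewrite lt_def dot_ge0 andbT; apply/eqP => /dot0 e; apply: Wnz.
  rewrite e; vunf; congr (_,_,_); ring.
set d0 := vsub A c.
move: T1 T2; rewrite /tri_face_tangent.
move=> [a1 [b1 [g1 [_ _ _ hs1]]]] /= [n1 o1u o1v].
move=> [a2 [b2 [g2 [_ _ _ hs2]]]] /= [n2 o2u o2v].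
have ey1 : vsub (vadd (vscale a1 A) (vadd (vscale b1 B) (vscale g1 C))) c = vadd d0 (lin3 b1 g1 0 u v t).
  have -> : a1 = 1 - b1 - g1 by lra.
  rewrite /d0 /u /v /lin3; vunf; congr (_,_,_); ring.
have ey2 : vsub (vadd (vscale a2 (vadd A t)) (vadd (vscale b2 (vadd B t)) (vscale g2 (vadd C t)))) c
   = vadd d0 (lin3 b2 g2 1 u v t).
  have -> : a2 = 1 - b2 - g2 by lra.
  rewrite /d0 /u /v /lin3; vunf; congr (_,_,_); ring.
rewrite ey1 in n1 o1u o1v; rewrite ey2 !vsub_tr -/u -/v in n2 o2u o2v.
rewrite -/u -/v !dot_d0 -/x ?hvv ?(dotC v u) ?huv ?tu ?tv in o1u o1v o2u o2v.
have eb : b2 = b1.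
  have : (b2 - b1) * x = 0 by lra.
  by move/eqP; rewrite mulf_eq0 subr_eq0 (gt_eqF x0) orbF => /eqP.
have eg : g2 = g1.
  have : (g2 - g1) * x = 0 by lra.
  by move/eqP; rewrite mulf_eq0 subr_eq0 (gt_eqF x0) orbF => /eqP.
rewrite eb eg lin3_shift in n2.
set y1 := vadd d0 (lin3 b1 g1 0 u v t) in n1 n2 *.
have yy : dot y1 y1 = r ^+ 2 by apply: vnorm_dot.
have yt : dot y1 t = - (hh / 2).
  have := vnorm_dot n2; rewrite dot_addt yy -/hh => e; lra.
have yu : dot u y1 = 0 by rewrite dotC /y1 dot_d0 -/x (dotC v u) huv tu; lra.
have yv : dot v y1 = 0 by rewrite dotC /y1 dot_d0 -/x hvv huv tv; lra.
have cW1 := cross_perp _ _ _ yu yv.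
have cWt := cross_perp _ _ _ hut hvt.
have pd1 := par_dot (cross u v) y1 t cW1.
have pd2 := par_dot (cross u v) y1 y1 cW1.
have pd3 := par_dot (cross u v) t t cWt.
have WW : 0 < dot (cross u v) (cross u v).
  rewrite lt_def dot_ge0 andbT; apply/eqP => /dot0; exact: Wnz.
have r2 : r ^+ 2 = hh / 4.
  rewrite yy yt -/hh in pd1 pd2 pd3.
  have : (dot (cross u v) (cross u v)) ^+ 2 * (hh * (hh / 4 - r ^+ 2)) = 0.
    have -> : (dot (cross u v) (cross u v)) ^+ 2 * (hh * (hh / 4 - r ^+ 2))
        = (dot (cross u v) (cross u v) * - (hh / 2)) ^+ 2
          - (dot (cross u v) (cross u v) * r ^+ 2) * (dot (cross u v) (cross u v) * hh) by field.
    by rewrite pd1 pd2 pd3; ring.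
  move/eqP; rewrite mulf_eq0 => /orP[|]; first by rewrite sqrf_eq0 (gt_eqF WW).
  rewrite mulf_eq0 (gt_eqF hh0) /= subr_eq0 => /eqP.
  by move->.
have hz : vadd y1 (vscale (1/2) t) = vzero R.
  by apply: dot0; rewrite dot_addht yy yt -/hh r2; field.
have hd0 := solve_d0 _ _ _ _ _ _ hz.
rewrite /par_face_tangent in F1 F2 F3.
move: F1 => [s1 [w1 [hs1b hw1b]]] /= [nf1 of1u of1t].
move: F2 => [s2 [w2 [hs2b hw2b]]] /= [nf2 of2u of2t].
move: F3 => [s3 [w3 [hs3b hw3b]]] /= [nf3 of3u of3t].
have ez1 : vsub (vadd A (vadd (vscale s1 (vsub B A)) (vscale w1 t))) c = lin3 (-b1 + s1) (-g1 + 0) (-(1/2) + w1) u v t.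
  rewrite -lin3_add -hd0 /d0 /u /v /lin3; vunf; congr (_,_,_); ring.
have ez2 : vsub (vadd B (vadd (vscale s2 (vsub C B)) (vscale w2 t))) c = lin3 (-b1 + (1 - s2)) (-g1 + s2) (-(1/2) + w2) u v t.
  rewrite -lin3_add -hd0 /d0 /u /v /lin3; vunf; congr (_,_,_); ring.
have ez3 : vsub (vadd C (vadd (vscale s3 (vsub A C)) (vscale w3 t))) c = lin3 (-b1 + 0) (-g1 + (1 - s3)) (-(1/2) + w3) u v t.
  rewrite -lin3_add -hd0 /d0 /u /v /lin3; vunf; congr (_,_,_); ring.
rewrite ez1 in nf1 of1u of1t.
rewrite ez2 in nf2 of2u of2t.
rewrite ez3 in nf3 of3u of3t.
move/vnorm_dot: nf1; rewrite gr r2 => nf1.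
move/vnorm_dot: nf2; rewrite gr r2 => nf2.
move/vnorm_dot: nf3; rewrite gr r2 => nf3.
rewrite dot_lin3 hut hvt -/hh in of1t.
rewrite dot_lin3 hut hvt -/hh in of2t.
rewrite dot_lin3 hut hvt -/hh in of3t.
rewrite -/u dot_lin3 -/x (dotC v u) huv tu in of1u.
rewrite -/u -/v ecb gr in of2u.
rewrite -/u -/v eac gr in of3u.
have hhx : hh = x / 3.
  apply: (prism_solve x hh b1 g1 s1 w1 s2 w2 s3 w3) => //.
  - by rewrite -of1t; field.
  - by rewrite -of1u; field.
  - by rewrite -nf1; field.
  - by rewrite -of2t; field.
  - by rewrite -of2u; field.
  - by rewrite -nf2; field.
  - by rewrite -of3t; field.
  - by rewrite -of3u; field.
  - by rewrite -nf3; field.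
have sameK : forall q : vec R, dot q q = x -> dot q t = 0 -> vnorm (cross q t) = vnorm (cross u t).
  move=> q ha hat; rewrite /vnorm !vlagr ha hat -/x hut -/hh //.
have Kcb : vnorm (cross (vsub C B) t) = vnorm (cross u t).
  apply: sameK; first by rewrite ecb gr; field.
  by rewrite ecb dot_lin3 hut hvt; ring.
have Kac : vnorm (cross (vsub A C) t) = vnorm (cross u t).
  apply: sameK; first by rewrite eac gr; field.
  by rewrite eac dot_lin3 hut hvt; ring.
move: hvol; rewrite /prism_surface /prism_volume /tri_area /par_area !vsub_tr -/u -/v Kcb Kac => hvol.
apply: (prism_final _ _ (vnorm t) x hh) => //.
- apply: divr_ge0 => //; exact: vnorm_ge0.
- exact: vnorm_ge0.
- exact: vnorm_ge0.
- by rewrite expr_div_n vnorm_sq vlagr -/x hvv huv; field.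
- by rewrite vnorm_sq vlagr -/x hut -/hh; ring.
- by rewrite vnorm_sq.
Qed.



End Pr.

Theorem proposition5p7 (R : rcfType) (A B C t Q1 Q2 Q3 Q4 E : vec R) :
  is_right_prism A B C t -> equilateral A B C -> prism_circumscribed A B C t ->
  prism_volume A B C t = 1 ->
  is_quad_pyramid Q1 Q2 Q3 Q4 E -> pyramid_volume Q1 Q2 Q3 Q4 E = 1 ->
  prism_surface A B C t < pyramid_surface Q1 Q2 Q3 Q4 E.
Proof.
move=> hP hE hC hV hQ hVQ.
have [S0 S3] := prism _ _ _ _ hP hE hC hV.
exact: (pyr _ _ _ _ _ _ hQ hVQ S0 S3).
Qed.
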